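(* Let $K \geq 2$ be an integer and let $\Delta_K = \{\mathbf{p} = (\hat{p}_1,\dots,\hat{p}_K) \in [0,1]^K : \sum_{k=1}^K \hat{p}_k = 1\}$ be the probability simplex. Fix $\mathbf{y} = (\hat{y}_1,\dots,\hat{y}_K) \in \Delta_K$. Let $j \in \{1,\dots,K\}$ be an index with $\hat{y}_j = \max_{1 \leq k \leq K} \hat{y}_k$, and let $\mathbf{t} = (\hat{t}_1,\dots,\hat{t}_K) \in \{0,1\}^K$ be the simplex vertex with $\hat{t}_j = 1$ and $\hat{t}_k = 0$ for $k \neq j$. Then $$\sum_{k=1}^K \log\left(\hat{t}_k + \hat{y}_k\right) \;\leq\; \sum_{k=1}^K \log\left(\hat{p}_k + \hat{y}_k\right) \qquad \text{for all } \mathbf{p} = (\hat{p}_1,\dots,\hat{p}_K) \in \Delta_K,$$ i.e. the function $\mathbf{p} \mapsto \sum_{k=1}^K \log(\hat{p}_k + \hat{y}_k)$ attains its minimum over $\Delta_K$ at $\mathbf{t}$.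
   Context: Here $\log$ is the natural logarithm, with the convention $\log 0 = -\infty$ (values in the extended reals). In the paper's setting, $\hat{y}_k$ is the ground-truth proportion of pixels in segmentation region $k$ and $\hat{p}_k$ is the predicted (soft) proportion of class $k$; the quantity $\sum_k \log(\hat{p}_k + \hat{y}_k)$ is the label-marginal term arising in the decomposition of the multi-class logarithmic Dice loss. *)

(* Defs.v *)
From mathcomp Require Import all_boot all_order all_algebra.
From mathcomp Require Import all_classical all_reals ereal exp.
Set Implicit Arguments. Unset Strict Implicit. Unset Printing Implicit Defensive.
Import Order.TTheory GRing.Theory Num.Theory.
Local Open Scope ring_scope.

(* Extended-real natural logarithm with log 0 = -oo (only applied to x >= 0). *)
Definition elog (R : realType) (x : R) : \bar R :=
  if x == 0 then -oo%E else (ln x)%:E.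

Definition in_simplex (R : realType) (K : nat) (p : 'I_K -> R) : Prop :=
  (forall k, 0 <= p k <= 1) /\ \sum_(k < K) p k = 1.

Definition vertex (R : realType) (K : nat) (j : 'I_K) : 'I_K -> R :=
  fun k => if k == j then 1 else 0.

(* Main.v *)
From mathcomp Require Import ring lra.
Require Import Defs.
From mathcomp Require Import all_boot all_order all_algebra.
From mathcomp Require Import all_classical all_reals ereal exp convex.
Import Order.TTheory GRing.Theory Num.Theory.
Local Open Scope ring_scope.

Lemma ln_conc (R : realType) (y q : R) : 0 < y -> 0 <= q -> q <= 1 ->
  ln y + q * (ln (1 + y) - ln y) <= ln (q + y).
Proof.
move=> y0 q0 q1.
have := @concave_ln R (Itv01 q0 q1) (1 + y) y (addr_gt0 ltr01 y0) y0.
rewrite !convRE /=.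
have -> : q * (1 + y) + (1 - q) * y = q + y by ring.
by move=> H; apply: le_trans H; rewrite /unstable.onem; lra.
Qed.

Lemma dmono (R : realType) (y z : R) : 0 < y -> y <= z ->
  ln (1 + y) - ln y >= ln (1 + z) - ln z.
Proof.
move=> y0 yz; have z0 : 0 < z by apply: lt_le_trans yz.
rewrite lerBrDr addrAC lerBlDr -!lnM ?posrE ?addr_gt0 //.
rewrite ler_ln ?posrE ?mulr_gt0 ?addr_gt0 //. nra.
Qed.

Lemma elogE (R : realType) (x : R) : 0 < x -> elog x = (ln x)%:E.
Proof. by move=> x0; rewrite /elog gt_eqF. Qed.

Theorem proposition1 (R : realType) (K : nat) (hK : (2 <= K)%N)
  (y : 'I_K -> R) (hy : in_simplex y)
  (j : 'I_K) (hj : forall k, y k <= y j)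
  (p : 'I_K -> R) (hp : in_simplex p) :
  (\sum_(k < K) elog (vertex R j k + y k) <= \sum_(k < K) elog (p k + y k))%E.
Proof.
case: hy => hy1 hy2; case: hp => hp1 hp2.
have yj0 : 0 < y j.
  rewrite ltNge; apply/negP => H.
  have : \sum_(k < K) y k <= \sum_(k < K) (0:R) by apply: ler_sum => k _; exact: le_trans (hj k) H.
  by rewrite hy2 big1_eq ler10.
case: (pselect (exists k, y k = 0)) => [[k yk0]|ny].
  have kj : k != j by apply/eqP => kj; move: yj0; rewrite -kj yk0 ltxx.
  rewrite (bigD1 k) //= /vertex (negbTE kj) yk0 addr0 /elog eqxx addNye.
  exact: leNye.
have ypos : forall k, 0 < y k.
  move=> k; have /andP[+ _] := hy1 k; rewrite le_eqVlt => /orP[/eqP H|//].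
  by exfalso; apply: ny; exists k.
set d := fun k => ln (1 + y k) - ln (y k).
rewrite (eq_bigr (fun k => (ln (y k) + vertex R j k * d k)%:E)); last first.
  move=> k _; rewrite /vertex; case: (k == j).
    by rewrite elogE ?addr_gt0 // mul1r /d; congr (_%:E); ring.
  by rewrite elogE ?add0r // mul0r addr0.
rewrite [X in (_ <= X)%E](eq_bigr (fun k => (ln (p k + y k))%:E)); last first.
  move=> k _; rewrite elogE //; have /andP[+ _] := hp1 k => H.
  exact: ltr_wpDl H (ypos k).
rewrite !sumEFin lee_fin big_split /=.
have -> : \sum_(i < K) vertex R j i * d i = d j.
  rewrite (bigD1 j) //= big1 ?addr0 /vertex ?eqxx ?mul1r //.
  by move=> i /negbTE ->; rewrite mul0r.
apply: (@le_trans _ _ (\sum_(i < K) (ln (y i) + p i * d i))); last first.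
  apply: ler_sum => i _; have /andP[H1 H2] := hp1 i.
  exact: ln_conc (ypos i) H1 H2.
rewrite big_split /= lerD2l.
have -> : d j = \sum_(i < K) p i * d j by rewrite -mulr_suml hp2 mul1r.
apply: ler_sum => i _; have /andP[H1 _] := hp1 i.
by apply: ler_wpM2l => //; apply: dmono.
Qed.
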